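(* Let $h$ and $k$ be relatively prime odd integers with $k>0$. Then $$B_{1}(h,k)=-10h\,s(h,k)+4h\,s(2h,k)+4h\,s(h,2k)+\frac{1}{2k}-\frac{1}{2}.$$
   Context: $[x]$ denotes the greatest integer $\le x$, and $((x))=x-[x]-\tfrac12$ if $x\notin\mathbb{Z}$, $((x))=0$ if $x\in\mathbb{Z}$. For integers $a,b$ with $b>0$: the Dedekind sum is $s(a,b)=\sum_{j=1}^{b-1}\left(\left(\frac{aj}{b}\right)\right)\left(\left(\frac{j}{b}\right)\right)$, and (for $\gcd(a,b)=1$) $$B_{1}(a,b)=\sum_{j=1}^{b-1}(-1)^{j+\left[\frac{aj}{b}\right]}\left[\frac{aj}{b}\right].$$ *)

(* Defs.v *)
From mathcomp Require Import all_boot all_order all_algebra.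
Set Implicit Arguments. Unset Strict Implicit. Unset Printing Implicit Defensive.
Import Order.TTheory GRing.Theory Num.Theory.
Local Open Scope ring_scope.

Definition sawtooth (x : rat) : rat :=
  if x \is a Num.int then 0 else x - (Num.floor x)%:~R - 1 / 2.

Definition dedekind_sum (a b : int) : rat :=
  \sum_(1 <= j < `|b|%N)
     sawtooth ((a * j%:Z)%:~R / b%:~R) * sawtooth ((j%:Z)%:~R / b%:~R).

Definition B1 (a b : int) : rat :=
  \sum_(1 <= j < `|b|%N)
     let f := Num.floor ((a * j%:Z)%:~R / b%:~R : rat) in
     (-1) ^ (j%:Z + f) * f%:~R.

(* Main.v *)
Require Import Defs.
From mathcomp Require Import all_boot all_order all_algebra.
From mathcomp Require Import zify ring lra.
Set Implicit Arguments. Unset Strict Implicit. Unset Printing Implicit Defensive.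
Import Order.TTheory GRing.Theory Num.Theory.
Lemma mul_inj a kn i j : coprime a kn -> i < kn -> j < kn ->
  (a * i) %% kn = (a * j) %% kn -> i = j.
Proof.
move=> co ik jk.
wlog le : i j ik jk / i <= j.
  move=> W E; case: (leqP i j) => H; first exact: W.
  symmetry; apply: W => //.
  exact: ltnW.
move=> E0.
have : (a * j == a * i %[mod kn]) by rewrite E0.
rewrite eqn_mod_dvd; last by rewrite leq_mul2l le orbT.
have co2 : coprime kn a by rewrite coprime_sym.
rewrite -mulnBr (Gauss_dvdr _ co2) => dv.
have lt : j - i < kn by rewrite ltn_subLR // (leq_trans jk) // leq_addl.
move: dv; case E: (j - i) => [|d]; first by move=> _; apply/eqP; rewrite eqn_leq le -subn_eq0 E.
by move=> /dvdn_leq => /(_ isT); rewrite leqNgt -E lt.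
Qed.
Lemma sub_mod_aux kn x y : 0 < y %% kn -> x %% kn = 0 -> y <= x ->
  (x - y) %% kn = kn - y %% kn.
Proof.
move=> u0 x0 yx.
have kn0 : 0 < kn.
  case: kn u0 x0 yx => // ; rewrite !modn0 => u0 x0 yx.
  by rewrite x0 leqn0 in yx; rewrite (eqP yx) in u0.
have [t xt] : exists t, x = t * kn by exists (x %/ kn); rewrite {1}(divn_eq x kn) x0 addn0.
set s := y %/ kn; set u := y %% kn.
have ye : y = s * kn + u by rewrite (divn_eq y kn).
have ul : u < kn by rewrite ltn_mod.
have ts : s < t.
  rewrite -(ltn_pmul2r kn0) -xt; apply: leq_trans yx; rewrite ye.
  by rewrite -[X in X < _]addn0 ltn_add2l.
have -> : x - y = (t - s - 1) * kn + (kn - u).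
  rewrite xt ye !mulnBl mul1n.
  have h1 : s * kn + kn <= t * kn by rewrite addnC -mulSn leq_pmul2r.
  move: h1 ul; move: (s * kn) (t * kn) => S T; lia.
by rewrite modnMDl modn_small // ltn_subrL kn0 u0.
Qed.

Lemma perm_sum0 n (g : nat -> nat) (F : nat -> nat) :
  (forall j, j < n -> g j < n) ->
  (forall i j, i < n -> j < n -> g i = g j -> i = j) ->
  \sum_(0 <= j < n) F (g j) = \sum_(0 <= j < n) F j.
Proof.
move=> gn ginj; rewrite !big_mkord.
pose g' (i : 'I_n) : 'I_n := Ordinal (gn _ (ltn_ord i)).
have inj' : injective g'.
  move=> i j /(congr1 val) /= /ginj H; apply/val_inj/H; exact: ltn_ord.
by rewrite [RHS](reindex_inj inj').
Qed.

Lemma perm_sum1 n (g : nat -> nat) (F : nat -> nat) :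
  0 < n -> g 0 = 0 ->
  (forall j, j < n -> g j < n) ->
  (forall i j, i < n -> j < n -> g i = g j -> i = j) ->
  \sum_(1 <= j < n) F (g j) = \sum_(1 <= j < n) F j.
Proof.
move=> n0 g0 gn ginj; have H := @perm_sum0 n g F gn ginj.
rewrite (@big_ltn _ 0 addn 0 n (fun j => F (g j)) n0) in H.
rewrite (@big_ltn _ 0 addn 0 n F n0) g0 in H.
exact: addnI H.
Qed.

Definition rr a kn j := (a * j) %% kn.

Lemma rr_lt a kn j : 0 < kn -> rr a kn j < kn.
Proof. by move=> k0; rewrite /rr ltn_mod. Qed.

Lemma rr_pos a kn j : coprime a kn -> 0 < j < kn -> 0 < rr a kn j.
Proof.
move=> co /andP[j0 jk]; rewrite lt0n; apply/negP => /eqP E.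
have kn0 : 0 < kn := ltn_trans j0 jk.
have E2 : j = 0.
  apply: (@mul_inj a kn j 0 co jk kn0).
  by rewrite muln0 mod0n.
by rewrite E2 in j0.
Qed.

Lemma rr_sym a kn j : coprime a kn -> 0 < j < kn ->
  rr a kn (kn - j) = kn - rr a kn j.
Proof.
move=> co jr; have P := rr_pos co jr; move: P; rewrite /rr mulnBr => P.
apply: sub_mod_aux => //; first by rewrite modnMl.
by rewrite leq_mul2l; case/andP: jr => _ /ltnW ->; rewrite orbT.
Qed.

Lemma rr_dbl a kn j : rr a kn ((2 * j) %% kn) = (2 * rr a kn j) %% kn.
Proof.
by rewrite /rr !modnMmr mulnCA.
Qed.

Lemma perm_mul a kn (F : nat -> nat) : coprime a kn -> 0 < kn ->
  \sum_(1 <= j < kn) F (rr a kn j) = \sum_(1 <= j < kn) F j.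
Proof.
move=> co k0; apply: perm_sum1 => //.
- by rewrite /rr muln0 mod0n.
- by move=> j _; exact: rr_lt.
- by move=> i j ik jk; exact: mul_inj.
Qed.

Lemma sum_sym kn (F : nat -> nat) :
  \sum_(1 <= j < kn) F j = \sum_(1 <= j < kn) F (kn - j).
Proof.
rewrite big_nat_rev; apply: eq_big_nat => i /andP[i1 ik].
congr F; rewrite add1n subSS; done.
Qed.

Lemma rec2 (F : nat -> nat) n :
  \sum_(1 <= j < n.+3) F j = \sum_(1 <= j < n.+1) F j + F n.+1 + F n.+2.
Proof. by rewrite big_nat_recr // big_nat_recr. Qed.

Lemma sum_first m :
  \sum_(1 <= j < m.*2.+1) j = 2 * \sum_(1 <= j < m.*2.+1) odd j * j + m /\
  \sum_(1 <= j < m.*2.+1) j = m * m.*2.+1.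
Proof.
elim: m => [|m [IH1 IH2]]; first by rewrite !big_geq.
have e : (m.+1).*2.+1 = (m.*2).+3 by rewrite doubleS.
rewrite e !rec2 IH2; split; last by lia.
rewrite IH2 in IH1.
rewrite (_ : odd m.*2.+1 = true); last by rewrite /= odd_double.
rewrite (_ : odd m.*2.+2 = false); last by rewrite /= odd_double.
lia.
Qed.

Lemma dbl_mod kn x : x < kn -> (2 * x) %% kn = 2 * x - kn * (kn <= 2 * x).
Proof.
move=> xk; case: leqP => H.
- rewrite muln1 -(subnK H) modnDr modn_small //; lia.
- by rewrite muln0 subn0 modn_small.
Qed.

Lemma odd_dbl_mod kn x : odd kn -> x < kn -> odd ((2 * x) %% kn) = (kn < 2 * x).
Proof.
move=> ok xk; rewrite dbl_mod //.
case: (leqP kn (2 * x)) => H.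
- have H2 : kn < 2 * x.
    rewrite ltn_neqAle H andbT; apply/negP => /eqP E.
    by move: ok; rewrite E oddM.
  rewrite H2 muln1 oddB // oddM /= ok //.
- by rewrite muln0 subn0 oddM /= ltnNge (ltnW H).
Qed.

Section Facts.
Variables (a kn : nat).
Hypotheses (ok : odd kn) (co : coprime a kn).
Local Notation r := (rr a kn).

Lemma kn_pos : 0 < kn.
Proof. by case: kn ok. Qed.

Lemma co2 : coprime 2 kn.
Proof. by rewrite coprime2n. Qed.

Lemma factE : 2 * \sum_(1 <= j < kn) (kn < 2 * r j) = kn - 1.
Proof.
have -> : 2 * \sum_(1 <= j < kn) (kn < 2 * r j) =
  \sum_(1 <= j < kn) ((kn < 2 * r j) + (kn < 2 * r (kn - j))).
  rewrite big_split /= -(@sum_sym kn (fun j => nat_of_bool (kn < 2 * r j))); lia.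
rewrite (eq_big_nat _ _ (F2 := fun _ => 1)); last first.
  move=> j jr; rewrite rr_sym //.
  have := rr_pos co jr; have := rr_lt a j kn_pos.
  move: ok; clear; move: (r j) => x; lia.
by rewrite sum_nat_const_nat muln1.
Qed.

Lemma factB : 2 * \sum_(1 <= j < kn) j * odd (j + r j) =
              kn * \sum_(1 <= j < kn) odd (j + r j).
Proof.
have -> : 2 * \sum_(1 <= j < kn) j * odd (j + r j) =
  \sum_(1 <= j < kn) (j * odd (j + r j) + (kn - j) * odd ((kn - j) + r (kn - j))).
  rewrite big_split /= -(@sum_sym kn (fun j => j * odd (j + r j))); lia.
rewrite big_distrr /=; apply: eq_big_nat => j jr.
rewrite rr_sym //.
have := rr_pos co jr; have := rr_lt a j kn_pos.
move: ok jr; clear; move: (r j) => x; lia.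
Qed.

End Facts.

Section Facts2.
Variables (a kn : nat).
Hypotheses (ok : odd kn) (co : coprime a kn).
Local Notation r := (rr a kn).

Lemma odd_ne kn' x : odd kn' -> (kn' <= 2 * x) = (kn' < 2 * x).
Proof.
move=> o; rewrite leq_eqVlt; case E: (kn' == 2 * x) => //=.
by move: o; rewrite (eqP E) oddM.
Qed.

Lemma factA : \sum_(1 <= j < kn) j * odd (r j) +
  kn * \sum_(1 <= j < kn) (kn < 2 * j) * (kn < 2 * r j) =
  2 * \sum_(1 <= j < kn) j * (kn < 2 * r j).
Proof.
rewrite -(@perm_mul 2 kn (fun x => x * odd (r x)) (co2 ok) (kn_pos ok)).
rewrite !big_distrr -big_split /=; apply: eq_big_nat => j /andP[j1 jk].
rewrite rr_dbl odd_dbl_mod //; last exact: rr_lt (kn_pos ok).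
rewrite /rr dbl_mod // odd_ne //.
case: (kn < 2 * (a * j %% kn)); case: (ltnP kn (2 * j)) => H; lia.
Qed.

Lemma factP : 2 * \sum_(1 <= j < kn) (kn < 2 * j) * (kn < 2 * r j) +
  \sum_(1 <= j < kn) odd (j + r j) = kn - 1.
Proof.
set N := \sum_(1 <= j < kn) _.
set M := \sum_(1 <= j < kn) (~~ (kn < 2 * j)) * (kn < 2 * r j).
have hM : N + M = \sum_(1 <= j < kn) (kn < 2 * r j).
  rewrite /N /M -big_split /=; apply: eq_big_nat => j _.
  by case: (kn < 2 * j); case: (kn < 2 * r j).
have hS : \sum_(1 <= j < kn) odd (j + r j) =
   \sum_(1 <= j < kn) (~~ odd j) * odd (j + r j) +
   \sum_(1 <= j < kn) (odd j) * odd (j + r j).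
  rewrite -big_split /=; apply: eq_big_nat => j _.
  by case: (odd j); case: (odd (j + r j)).
have hO : \sum_(1 <= j < kn) (odd j) * odd (j + r j) =
   \sum_(1 <= j < kn) (~~ odd j) * odd (j + r j).
  rewrite (@sum_sym kn (fun j => odd j * odd (j + r j))).
  apply: eq_big_nat => j jr; rewrite rr_sym //.
  have := rr_pos co jr; have := rr_lt a j (kn_pos ok).
  move: ok jr; clear; move: (r j) => x; lia.
have hE : \sum_(1 <= j < kn) (~~ odd j) * odd (j + r j) = M.
  rewrite -(@perm_mul 2 kn (fun x => (~~ odd x) * odd (x + r x)) (co2 ok) (kn_pos ok)).
  apply: eq_big_nat => j /andP[j1 jk].
  rewrite rr_dbl oddD odd_dbl_mod //; last exact: rr_lt (kn_pos ok).
  rewrite /rr odd_dbl_mod //.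
  by case: (kn < 2 * j); case: (kn < 2 * (a * j %% kn)).
have := factE ok co.
rewrite hS hO hE -hM; lia.
Qed.

End Facts2.

Local Open Scope ring_scope.

Lemma saw_frac (q : int) (y : rat) : 0 < y < 1 -> sawtooth (q%:~R + y) = y - 1 / 2.
Proof.
move=> /andP[y0 y1].
have fl : Num.floor (q%:~R + y) = q.
  apply: floor_def; rewrite intrD; apply/andP; split; lra.
rewrite /sawtooth intrEfloor fl.
have -> : ((q%:~R : rat) == q%:~R + y) = false.
  apply/negP => /eqP E; have : y = 0 by lra. by move=> E2; rewrite E2 ltxx in y0.
by rewrite /=; lra.
Qed.

Lemma saw_int (q : int) : sawtooth q%:~R = 0.
Proof. by rewrite /sawtooth intrEfloor intrKfloor eqxx. Qed.

Lemma sign_even (r : nat) (w : int) : (-1 : rat) ^ (Posz r + 2 * w) = (-1) ^+ r.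
Proof.
rewrite expfzDr ?oppr_eq0 ?oner_eq0 // -exprz_exp.
have -> : (-1 : rat) ^ 2%:Z = 1.
  by change ((-1 : rat) ^+ 2 = 1); rewrite sqrrN expr1n.
by rewrite exp1rz mulr1.
Qed.

Lemma saw_qr (N : int) (D : nat) (q : int) (r : nat) :
  (0 < r < D)%N -> N = q * D%:Z + r%:Z ->
  sawtooth (N%:~R / (Posz D)%:~R) = r%:R / D%:R - 1 / 2.
Proof.
move=> /andP[r0 rD] E.
have D0 : (0 < D)%N by apply: ltn_trans rD.
have D0' : (0 : rat) < D%:R by rewrite ltr0n.
have -> : (N%:~R / (Posz D)%:~R : rat) = q%:~R + r%:R / D%:R.
  rewrite E intrD intrM /=; change ((Posz D)%:~R : rat) with (D%:R : rat).
  change ((Posz r)%:~R : rat) with (r%:R : rat).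
  field; rewrite pnatr_eq0 -lt0n //.
apply: saw_frac; apply/andP; split.
  by apply: divr_gt0; rewrite ?ltr0n.
by rewrite ltr_pdivrMr // mul1r ltr_nat.
Qed.


Lemma floor_qr (N : int) (D : nat) (q : int) (r : nat) :
  (0 < r < D)%N -> N = q * D%:Z + r%:Z ->
  Num.floor (N%:~R / (Posz D)%:~R : rat) = q.
Proof.
move=> /andP[r0 rD] E.
have D0 : (0 < D)%N by apply: ltn_trans rD.
have D0' : (0 : rat) < D%:R by rewrite ltr0n.
have -> : (N%:~R / (Posz D)%:~R : rat) = q%:~R + r%:R / D%:R.
  rewrite E intrD intrM /=; change ((Posz D)%:~R : rat) with (D%:R : rat).
  change ((Posz r)%:~R : rat) with (r%:R : rat).
  field; rewrite pnatr_eq0 -lt0n //.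
have y0 : (0 : rat) < r%:R / D%:R by apply: divr_gt0; rewrite ?ltr0n.
have y1 : (r%:R / D%:R : rat) < 1 by rewrite ltr_pdivrMr // mul1r ltr_nat.
apply: floor_def; rewrite intrD; apply/andP; split; lra.
Qed.

Lemma decomp (h : int) (kn j : nat) : (0 < kn)%N ->
  h * j%:Z = (h * j%:Z %/ kn%:Z)%Z * kn%:Z + (rr `|(h %% kn%:Z)%Z| kn j)%:Z.
Proof.
move=> k0; rewrite {1}(divz_eq (h * j%:Z) kn%:Z); congr (_ + _).
rewrite -modzMml /rr -modz_nat PoszM gez0_abs //.
by rewrite modz_ge0 // -lt0n.
Qed.

Lemma split2 (F : nat -> rat) n : (0 < n)%N ->
  \sum_(1 <= J < (2 * n)%N) F J = \sum_(1 <= j < n) (F j + F (2 * n - j)%N) + F n.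
Proof.
move=> n0.
have E : \sum_(n.+1 <= i < 2 * n) F i = \sum_(1 <= j < n) F (2 * n - j)%N.
  rewrite -[n.+1]add1n big_addn.
  have -> : (2 * n - n = n)%N by lia.
  rewrite big_nat_rev; apply: eq_big_nat => i /andP[i1 i2]; congr F; lia.
rewrite (@big_cat_nat _ _ _ n) //=; last by lia.
rewrite (@big_ltn _ _ _ n); last by lia.
rewrite E big_split /=.
by rewrite [F n + _]addrC addrA.
Qed.

Section Main.
Variables (h h2 : int) (kn m : nat).
Hypotheses (km : kn = m.*2.+1) (eh : h = 2 * h2 + 1)
  (co : coprime `|(h %% kn%:Z)%Z|%N kn).
Local Notation a := `|(h %% kn%:Z)%Z|%N.
Local Notation r := (rr a kn).

Lemma kn0 : (0 < kn)%N. Proof. by rewrite km. Qed.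
Lemma okn : odd kn. Proof. by rewrite km /= odd_double. Qed.

Lemma rb j : (0 < j < kn)%N -> (0 < r j < kn)%N.
Proof. by move=> jr; rewrite rr_pos // rr_lt // kn0. Qed.

Lemma B1_eq : B1 h kn = \sum_(1 <= j < kn)
   (1 - 2 * (odd (r j))%:R) * ((h%:~R * j%:R - (r j)%:R) / kn%:R).
Proof.
rewrite /B1 absz_nat; apply: eq_big_nat => j jr.
have D1 := decomp h j kn0.
rewrite (floor_qr (rb jr) D1).
set q := ((h * Posz j) %/ kn%:Z)%Z in D1 *.
have D2 : Posz j + q = Posz (r j) + 2 * (Posz j - Posz (r j) + h2 * Posz j - Posz m * q).
  move: D1; rewrite eh km; clear; move: (r j) => x; lia.
rewrite D2 sign_even -signr_odd.
have -> : (q%:~R : rat) = (h%:~R * j%:R - (r j)%:R) / kn%:R.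
  have := congr1 (fun z : int => (z%:~R : rat)) D1.
  rewrite /= intrD !intrM /= => ->.
  change ((Posz kn)%:~R : rat) with (kn%:R : rat).
  change ((Posz j)%:~R : rat) with (j%:R : rat).
  change ((Posz (r j))%:~R : rat) with ((r j)%:R : rat).
  field; rewrite pnatr_eq0 -lt0n kn0 //.
by case: (odd (r j)); rewrite /= ?expr1 ?expr0; ring.
Qed.


Lemma S1_eq : dedekind_sum h kn = \sum_(1 <= j < kn)
   ((r j)%:R / kn%:R - 1 / 2) * (j%:R / kn%:R - 1 / 2).
Proof.
rewrite /dedekind_sum absz_nat; apply: eq_big_nat => j jr.
rewrite (saw_qr (rb jr) (decomp h j kn0)).
by rewrite (@saw_qr (Posz j) kn 0 j jr) // mul0r add0r.
Qed.

Lemma S2_eq : dedekind_sum (2 * h) kn = \sum_(1 <= j < kn)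
   ((2 * (r j)%:R - kn%:R * (kn < 2 * r j)%N%:R) / kn%:R - 1 / 2) * (j%:R / kn%:R - 1 / 2).
Proof.
rewrite /dedekind_sum absz_nat; apply: eq_big_nat => j jr.
rewrite (@saw_qr (Posz j) kn 0 j jr) // ?mul0r ?add0r //.
have D1 := decomp h j kn0.
set q := ((h * Posz j) %/ kn%:Z)%Z in D1.
have := rb jr; have := okn; move: D1; move: (r j) => x D1 ok xb.
case E: (kn < 2 * x)%N.
- have xb2 : (0 < 2 * x - kn < kn)%N by lia.
  have D2 : 2 * h * Posz j = (2 * q + 1) * kn%:Z + Posz (2 * x - kn)%N.
    move: D1 E; clear; lia.
  rewrite (saw_qr xb2 D2) natrB; last by lia.
  by rewrite natrM mulr1.
- have xb2 : (0 < 2 * x < kn)%N by lia.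
  have D2 : 2 * h * Posz j = (2 * q) * kn%:Z + Posz (2 * x)%N.
    move: D1 E; clear; lia.
  by rewrite (saw_qr xb2 D2) natrM mulr0 subr0.
Qed.


Lemma S3_eq : dedekind_sum h (Posz (2 * kn)%N) = \sum_(1 <= j < kn)
   2 * ((((r j + kn * odd (j + r j))%N)%:R / (2 * kn)%N%:R - 1 / 2) *
        (j%:R / (2 * kn)%N%:R - 1 / 2)).
Proof.
have k0 := kn0.
have k2 : (0 < 2 * kn)%N by lia.
have D0 : (2 * kn)%N%:R != 0 :> rat by rewrite pnatr_eq0 -lt0n.
rewrite /dedekind_sum absz_nat split2 //.
rewrite [X in _ + X](_ : _ = 0); last first.
  have kb : (0 < kn < 2 * kn)%N by lia.
  rewrite (@saw_qr (Posz kn) (2 * kn) 0 kn kb) ?mul0r ?add0r //.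
  rewrite natrM; apply/eqP; rewrite mulf_eq0; apply/orP; right.
  apply/eqP; field; rewrite pnatr_eq0 -lt0n //.
rewrite addr0; apply: eq_big_nat => j jr.
have jb : (0 < j < 2 * kn)%N by lia.
have jb2 : (0 < 2 * kn - j < 2 * kn)%N by lia.
rewrite (@saw_qr (Posz j) (2 * kn) 0 j jb) ?mul0r ?add0r //.
rewrite (@saw_qr (Posz (2 * kn - j)%N) (2 * kn) 0 (2 * kn - j) jb2) ?mul0r ?add0r //.
have D1 := decomp h j kn0.
set q := ((h * Posz j) %/ kn%:Z)%Z in D1.
have hp := odd_double_half (j + r j).
have := rb jr; move: D1 hp; move: (r j) => x D1 hp xb.
set p := odd (j + x) in hp *.
set s := ((j + x)./2)%N in hp.
have D3a : q = 2 * (Posz s - Posz x + h2 * Posz j - Posz m * q) + Posz p.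
  move: D1 hp; rewrite eh km; clear; lia.
move: D3a; move: (Posz s - Posz x + h2 * Posz j - Posz m * q) => t D3a.
rewrite D3a in D1.
have xb3 : (0 < x + kn * p < 2 * kn)%N by case: p {D1 D3a hp}; lia.
have D3 : h * Posz j = t * Posz (2 * kn)%N + Posz (x + kn * p)%N.
  by move: D1; case: p {D3a hp xb3}; clear; lia.
have xb4 : (0 < 2 * kn - (x + kn * p) < 2 * kn)%N by lia.
have D4 : h * Posz (2 * kn - j)%N = (h - t - 1) * Posz (2 * kn)%N +
          Posz (2 * kn - (x + kn * p))%N.
  by move: D3 xb3 jb; clear; lia.
rewrite (saw_qr xb3 D3) (saw_qr xb4 D4).
rewrite !natrB; [|lia|lia].
field; rewrite pnatr_eq0 -lt0n //.
Qed.


Lemma final_eq :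
  \sum_(1 <= j < kn)
   (1 - 2 * (odd (r j))%:R : rat) * ((h%:~R * j%:R - (r j)%:R) / kn%:R) =
  - 10 * h%:~R * \sum_(1 <= j < kn)
   ((r j)%:R / kn%:R - 1 / 2) * (j%:R / kn%:R - 1 / 2)
  + 4 * h%:~R * \sum_(1 <= j < kn)
   ((2 * (r j)%:R - kn%:R * (kn < 2 * r j)%N%:R) / kn%:R - 1 / 2) * (j%:R / kn%:R - 1 / 2)
  + 4 * h%:~R * \sum_(1 <= j < kn)
   2 * ((((r j + kn * odd (j + r j))%N)%:R / (2 * kn)%N%:R - 1 / 2) *
        (j%:R / (2 * kn)%N%:R - 1 / 2))
  + 1 / (2 * kn%:R) - 1 / 2.
Proof.
have k0 := kn0.
have D0 : kn%:R != 0 :> rat by rewrite pnatr_eq0 -lt0n.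
set Y1 := fun j => (r j)%:R - 2 * ((odd (r j) * r j)%N)%:R : rat.
set Y2 := fun j => -2 * ((j * odd (r j))%N)%:R + 4 * ((j * (kn < 2 * r j))%N)%:R
   - 2 * ((j * odd (j + r j))%N)%:R + (r j)%:R : rat.
set Y3 := fun j => - (1 / 2) - 2 * ((kn < 2 * r j)%N)%:R + 2 * ((odd (j + r j) : nat))%:R : rat.
rewrite (eq_big_nat _ _ (F2 := fun j =>
   (h%:~R : rat) * (-10 * (((r j)%:R / kn%:R - 1 / 2) * (j%:R / kn%:R - 1 / 2))
   + 4 * (((2 * (r j)%:R - kn%:R * (kn < 2 * r j)%N%:R) / kn%:R - 1 / 2) * (j%:R / kn%:R - 1 / 2))
   + 4 * (2 * ((((r j + kn * odd (j + r j))%N)%:R / (2 * kn)%N%:R - 1 / 2) *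
        (j%:R / (2 * kn)%N%:R - 1 / 2))))
   + (-(1 / kn%:R) * Y1 j + h%:~R / kn%:R * Y2 j + h%:~R * Y3 j))); last first.
  move=> j _; rewrite /Y1 /Y2 /Y3 !natrM !natrD !natrM.
  field; done.
rewrite big_split /= -mulr_sumr !big_split /= -!mulr_sumr.
have fR : (\sum_(1 <= j < kn) r j = \sum_(1 <= j < kn) j)%N :=
  @perm_mul _ kn (fun x => x) co k0.
have fOR : (\sum_(1 <= j < kn) odd (r j) * r j = \sum_(1 <= j < kn) odd j * j)%N :=
  @perm_mul _ kn (fun x => (odd x * x)%N) co k0.
have [fJ1 fJ2] := sum_first m; rewrite -km in fJ1 fJ2.
have fE := factE okn co.
have fB := factB okn co.
have fA := factA okn co.
have fP := factP okn co.
set SR := (\sum_(1 <= j < kn) r j)%N in fR.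
set SOR := (\sum_(1 <= j < kn) odd (r j) * r j)%N in fOR.
set SP := (\sum_(1 <= j < kn) odd (j + r j))%N in fB fP.
have Y1s : \sum_(1 <= j < kn) Y1 j = m%:R.
  rewrite /Y1 /= big_split /= sumrN -mulr_sumr -!natr_sum -/SR -/SOR.
  have : (SR = 2 * SOR + m)%N by rewrite fR fOR fJ1.
  move=> ->; rewrite natrD natrM; ring.
have Y2s : \sum_(1 <= j < kn) Y2 j = kn%:R * (3 * m%:R - 2 * SP%:R).
  rewrite /Y2 /= !big_split /= !sumrN -!mulr_sumr -!natr_sum -/SR.
  set SA := (\sum_(1 <= j < kn) j * odd (r j))%N in fA *.
  set SB := (\sum_(1 <= j < kn) j * odd (j + r j))%N in fB *.
  set SC := (\sum_(1 <= j < kn) j * (kn < 2 * r j))%N in fA *.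
  set SN := (\sum_(1 <= j < kn) (kn < 2 * j) * (kn < 2 * r j))%N in fA fP.
  have fP2 : (kn * (2 * SN + SP) = kn * (kn - 1))%N by rewrite fP.
  have H : (4 * SC + SR + 2 * kn * SP = 2 * SA + 2 * SB + 3 * m * kn)%N.
    move: fR fJ2 fA fB fP2 km; clear; lia.
  have := congr1 (fun n : nat => n%:R : rat) H.
  rewrite /= !natrD !natrM => H'.
  lra.
have Y3s : \sum_(1 <= j < kn) Y3 j = - (3 * m%:R) + 2 * SP%:R.
  rewrite /Y3 /= !big_split /= !sumrN -!mulr_sumr -!natr_sum -/SP sumr_const_nat.
  have -> : (\sum_(1 <= j < kn) (kn < 2 * r j))%N = m by move: fE km; clear; lia.
  have -> : (kn - 1 = 2 * m)%N by move: km; clear; lia.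
  by rewrite -[_ *+ (2 * m)%N]mulr_natr natrM; field.
have Ekn : kn%:R = 2 * m%:R + 1 :> rat by rewrite km -addn1 -mul2n natrD natrM.
have D1 : 2 * m%:R + 1 != 0 :> rat by rewrite -Ekn.
have E : forall (S1 S2 S3 y1 y2 y3 : rat), y1 = m%:R ->
  y2 = kn%:R * (3 * m%:R - 2 * SP%:R) -> y3 = - (3 * m%:R) + 2 * SP%:R ->
  h%:~R * (-10 * S1 + 4 * S2 + 4 * (2 * S3)) +
    (- (1 / kn%:R) * y1 + h%:~R / kn%:R * y2 + h%:~R * y3) =
  -10 * h%:~R * S1 + 4 * h%:~R * S2 + 4 * h%:~R * (2 * S3) + 1 / (2 * kn%:R) - 1 / 2.
  move=> S1 S2 S3 y1 y2 y3 -> -> ->; rewrite Ekn; field; done.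
exact: (E _ _ _ _ _ _ Y1s Y2s Y3s).
Qed.

End Main.

Theorem theorem20 (h k : int) :
  odd `|h|%N -> odd `|k|%N -> 0 < k -> coprimez h k ->
  B1 h k =
    - 10 * h%:~R * dedekind_sum h k + 4 * h%:~R * dedekind_sum (2 * h) k
    + 4 * h%:~R * dedekind_sum h (2 * k) + 1 / (2 * k%:~R) - 1 / 2.
Proof.
move=> oh; case: k => kn ok k0 cop; last by [].
have [h2 eh] : exists h2, h = 2 * h2 + 1 by exists (h %/ 2)%Z; lia.
have km : kn = (kn./2).*2.+1.
  by rewrite -[LHS]odd_double_half; rewrite /= in ok; rewrite ok add1n.
have coa : coprime `|(h %% kn%:Z)%Z|%N kn.
  by move: cop; rewrite /coprimez -gcdz_modl.
rewrite (B1_eq km eh coa) (S1_eq km coa) (S2_eq km eh coa).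
have -> : 2 * Posz kn = Posz (2 * kn)%N by rewrite PoszM.
rewrite (S3_eq km eh coa).
exact: (final_eq km coa).
Qed.
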